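(* Let $\mathcal{H}$ be an infinite-dimensional separable complex Hilbert space, let $A:\mathcal{H}\to\mathcal{H}$ be compact and injective, let $g\in\mathrm{ran}A$, and let $f\in\mathcal{H}$ be the unique vector with $Af=g$. Let $(u_n)_{n\in\mathbb{N}}$ and $(v_n)_{n\in\mathbb{N}}$ be orthonormal bases of $\mathcal{H}$, and let $A_N$, $g_N$ and $\widehat{x}$ be as in the context. Let $(f^{(N)})_{N\in\mathbb{N}}$ be a sequence with $f^{(N)}\in\mathbb{C}^N$ such that, writing $\varepsilon^{(N)}:=A_Nf^{(N)}-g_N\in\mathbb{C}^N$, one has $\|\varepsilon^{(N)}\|_{\mathbb{C}^N}\to0$ as $N\to\infty$. Assume moreover that $\sup_{N}\|\widehat{f^{(N)}}\|_{\mathcal{H}}<\infty$. Then, as $N\to\infty$, \[\|g-A\widehat{f^{(N)}}\|_{\mathcal{H}}\to0\qquad\text{and}\qquad f-\widehat{f^{(N)}}\rightharpoonup0\ \text{(weakly in }\mathcal{H}).\]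
   Context: For orthonormal bases $(u_n)$, $(v_n)$ of $\mathcal{H}$ and $N\in\mathbb{N}$: $A_N$ is the $N\times N$ matrix with entries $(A_N)_{ij}=\langle v_i,Au_j\rangle$ for $i,j\in\{1,\dots,N\}$; $g_N=(\langle v_1,g\rangle,\dots,\langle v_N,g\rangle)\in\mathbb{C}^N$; and for $x=(x_1,\dots,x_N)\in\mathbb{C}^N$, $\widehat{x}:=\sum_{n=1}^Nx_nu_n\in\mathcal{H}$. The inner product is antilinear in the first entry. Weak convergence $\xi_N\rightharpoonup\xi$ means $\langle\eta,\xi_N\rangle\to\langle\eta,\xi\rangle$ for every $\eta\in\mathcal{H}$. *)

(* Defs.v *)
From Stdlib Require Import Reals Lra.
Open Scope R_scope.

Record Cplx : Type := mkC { Re : R; Im : R }.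
Definition C0 : Cplx := mkC 0 0.
Definition C1 : Cplx := mkC 1 0.
Definition Cadd (a b : Cplx) : Cplx := mkC (Re a + Re b) (Im a + Im b).
Definition Copp (a : Cplx) : Cplx := mkC (- Re a) (- Im a).
Definition Csub (a b : Cplx) : Cplx := Cadd a (Copp b).
Definition Cmul (a b : Cplx) : Cplx :=
  mkC (Re a * Re b - Im a * Im b) (Re a * Im b + Im a * Re b).
Definition Cconj (a : Cplx) : Cplx := mkC (Re a) (- Im a).
Definition Cmod (a : Cplx) : R := sqrt (Re a ^ 2 + Im a ^ 2).

Fixpoint Csum (N : nat) (F : nat -> Cplx) : Cplx :=
  match N with O => C0 | S n => Cadd (Csum n F) (F n) end.

(* Inner product antilinear in the first entry, linear in the second. *)
Record HilbertSpace (X : Type) : Type := {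
  hadd : X -> X -> X;
  hzero : X;
  hopp : X -> X;
  hscal : Cplx -> X -> X;
  hinner : X -> X -> Cplx;
  hadd_assoc : forall x y z, hadd x (hadd y z) = hadd (hadd x y) z;
  hadd_comm : forall x y, hadd x y = hadd y x;
  hadd_0 : forall x, hadd x hzero = x;
  hadd_opp : forall x, hadd x (hopp x) = hzero;
  hscal_assoc : forall a b x, hscal a (hscal b x) = hscal (Cmul a b) x;
  hscal_1 : forall x, hscal C1 x = x;
  hscal_distr_l : forall a x y, hscal a (hadd x y) = hadd (hscal a x) (hscal a y);
  hscal_distr_r : forall a b x, hscal (Cadd a b) x = hadd (hscal a x) (hscal b x);
  hinner_conj : forall x y, hinner x y = Cconj (hinner y x);
  hinner_add_r : forall x y z, hinner x (hadd y z) = Cadd (hinner x y) (hinner x z);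
  hinner_scal_r : forall a x y, hinner x (hscal a y) = Cmul a (hinner x y);
  hinner_pos : forall x, Im (hinner x x) = 0 /\ 0 <= Re (hinner x x);
  hinner_def : forall x, hinner x x = C0 -> x = hzero;
  hcomplete : forall u : nat -> X,
    (forall eps, eps > 0 -> exists M, forall m n, (m >= M)%nat -> (n >= M)%nat ->
       sqrt (Re (hinner (hadd (u m) (hopp (u n))) (hadd (u m) (hopp (u n))))) < eps) ->
    exists l, forall eps, eps > 0 -> exists M, forall n, (n >= M)%nat ->
       sqrt (Re (hinner (hadd (u n) (hopp l)) (hadd (u n) (hopp l)))) < eps
}.

Arguments hadd {X} h.
Arguments hzero {X} h.
Arguments hopp {X} h.
Arguments hscal {X} h.
Arguments hinner {X} h.

Section Ops.
Context {X : Type} (HX : HilbertSpace X).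

Definition hsub (x y : X) : X := hadd HX x (hopp HX y).
Definition hnorm (x : X) : R := sqrt (Re (hinner HX x x)).

Fixpoint hsum (N : nat) (F : nat -> X) : X :=
  match N with O => hzero HX | S n => hadd HX (hsum n F) (F n) end.

Definition separable : Prop :=
  exists D : nat -> X, forall x eps, eps > 0 -> exists n, hnorm (hsub x (D n)) < eps.

Definition infinite_dimensional : Prop :=
  forall (n : nat) (e : nat -> X), exists x,
    forall c : nat -> Cplx, x <> hsum n (fun i => hscal HX (c i) (e i)).

Definition is_linear (A : X -> X) : Prop :=
  (forall x y, A (hadd HX x y) = hadd HX (A x) (A y)) /\
  (forall a x, A (hscal HX a x) = hscal HX a (A x)).

Definition compact_operator (A : X -> X) : Prop :=
  is_linear A /\
  forall x : nat -> X, (exists M, forall n, hnorm (x n) <= M) ->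
    exists phi : nat -> nat, (forall n, (phi n < phi (S n))%nat) /\
      exists l, Un_cv (fun n => hnorm (hsub (A (x (phi n))) l)) 0.

Definition orthonormal_basis (u : nat -> X) : Prop :=
  (forall i j, hinner HX (u i) (u j) = if Nat.eqb i j then C1 else C0) /\
  (forall x eps, eps > 0 -> exists (N : nat) (c : nat -> Cplx),
     hnorm (hsub x (hsum N (fun n => hscal HX (c n) (u n)))) < eps).

(* A_N, g_N, hat; vectors of Cplx^N are represented by nat -> Cplx, only the
   entries with index < N being relevant (0-based indices). *)
Definition matA (A : X -> X) (u v : nat -> X) (i j : nat) : Cplx :=
  hinner HX (v i) (A (u j)).
Definition vecg (v : nat -> X) (g : X) (i : nat) : Cplx := hinner HX (v i) g.
Definition hat (u : nat -> X) (N : nat) (x : nat -> Cplx) : X :=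
  hsum N (fun n => hscal HX (x n) (u n)).

Definition residual (A : X -> X) (u v : nat -> X) (g : X) (N : nat)
  (x : nat -> Cplx) (i : nat) : Cplx :=
  Csub (Csum N (fun j => Cmul (matA A u v i j) (x j))) (vecg v g i).

Definition CNnorm (N : nat) (x : nat -> Cplx) : R :=
  sqrt (Csum N (fun i => mkC (Cmod (x i) ^ 2) 0)).(Re).

End Ops.

(* Main.v *)
Require Import Defs.
From Stdlib Require Import Reals.
From Stdlib Require Import Lra Psatz Classical IndefiniteDescription.
Open Scope R_scope.


Lemma Cext a b : Re a = Re b -> Im a = Im b -> a = b.
Proof. destruct a, b; simpl; intros; subst; auto. Qed.
Ltac ceq := apply Cext; unfold Cadd, Csub, Copp, Cmul, Cconj, C0, Defs.C1 in *; simpl in *; ring.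

Lemma Cmod_ge0 a : 0 <= Cmod a.
Proof. apply sqrt_pos. Qed.
Lemma Cmod_sq a : Cmod a ^ 2 = Re a ^ 2 + Im a ^ 2.
Proof. unfold Cmod. rewrite pow2_sqrt; [auto| nra]. Qed.
Lemma Cmod_mul a b : Cmod (Cmul a b) = Cmod a * Cmod b.
Proof. unfold Cmod, Cmul; simpl. rewrite <- sqrt_mult by nra. f_equal; ring. Qed.
Lemma sq_le a b : 0 <= b -> a ^ 2 <= b ^ 2 -> a <= b.
Proof. intros. nra. Qed.
Lemma Cmod_add a b : Cmod (Cadd a b) <= Cmod a + Cmod b.
Proof.
  apply sq_le. pose proof (Cmod_ge0 a); pose proof (Cmod_ge0 b); lra.
  assert (Hc: Re a * Re b + Im a * Im b <= Cmod a * Cmod b).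
  { apply Rle_trans with (Rabs (Re a * Re b + Im a * Im b)). apply Rle_abs.
    apply sq_le. pose proof (Cmod_ge0 a); pose proof (Cmod_ge0 b); nra.
    rewrite pow2_abs, Rpow_mult_distr, !Cmod_sq. pose proof (pow2_ge_0 (Re a * Im b - Im a * Re b)). nra. }
  replace ((Cmod a + Cmod b)^2) with (Cmod a ^2 + Cmod b ^2 + 2 * (Cmod a * Cmod b)) by ring.
  rewrite !Cmod_sq. unfold Cadd; simpl. nra.
Qed.
Lemma Cmod_opp a : Cmod (Copp a) = Cmod a.
Proof. unfold Cmod, Copp; simpl; f_equal; ring. Qed.
Lemma Cmod_conj a : Cmod (Cconj a) = Cmod a.
Proof. unfold Cmod, Cconj; simpl; f_equal; ring. Qed.
Lemma Cmod_C0 : Cmod C0 = 0.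
Proof. unfold Cmod, C0; simpl. replace (0 * (0 * 1) + 0 * (0 * 1)) with 0 by ring. apply sqrt_0. Qed.
Lemma Cmod_eq0 a : Cmod a = 0 -> a = C0.
Proof. intros H. assert (Cmod a ^2 = 0) by (rewrite H; ring). rewrite Cmod_sq in H0.
  apply Cext; simpl; nra. Qed.
Lemma Cmod_Re a : Rabs (Re a) <= Cmod a.
Proof. apply sq_le. apply Cmod_ge0. rewrite pow2_abs, Cmod_sq. nra. Qed.
Lemma Cmod_real r : Cmod (mkC r 0) = Rabs r.
Proof. unfold Cmod; simpl. rewrite <- sqrt_Rsqr_abs. f_equal. unfold Rsqr. ring. Qed.
Lemma Cmod_sub a b : Cmod (Csub a b) <= Cmod a + Cmod b.
Proof. unfold Csub. rewrite <- (Cmod_opp b). apply Cmod_add. Qed.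
Lemma Cmod_sub_sym a b : Cmod (Csub a b) = Cmod (Csub b a).
Proof. replace (Csub a b) with (Copp (Csub b a)) by ceq. apply Cmod_opp. Qed.

Lemma choice_nat {T} (Q : nat -> T -> Prop) : (forall n, exists x, Q n x) -> exists f, forall n, Q n (f n).
Proof. apply functional_choice. Qed.

Section Hil.
Context {X : Type} (H : HilbertSpace X).
Local Notation "x +h y" := (hadd H x y) (at level 50, left associativity).
Local Notation "a *h x" := (hscal H a x) (at level 40).
Local Notation "x -h y" := (hsub H x y) (at level 50, left associativity).
Local Notation "'O'" := (hzero H).
Local Notation "<< x , y >>" := (hinner H x y).
Local Notation nrm := (hnorm H).
Definition nsqd x := Re << x , x >>.

Lemma add_cancel a b c : a +h b = a +h c -> b = c.
Proof.
  intros E. assert (hopp H a +h (a +h b) = hopp H a +h (a +h c)) by (rewrite E; auto).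
  rewrite !hadd_assoc, (hadd_comm _ H (hopp H a)), hadd_opp in H0.
  rewrite !(hadd_comm _ H O), !hadd_0 in H0. auto.
Qed.
Lemma add_0_l x : O +h x = x.
Proof. rewrite hadd_comm, hadd_0. auto. Qed.
Lemma scal_C0 x : C0 *h x = O.
Proof. apply (add_cancel (C0 *h x)). rewrite <- hscal_distr_r, hadd_0. f_equal. ceq. Qed.
Lemma scal_O a : a *h O = O.
Proof. apply (add_cancel (a *h O)). rewrite <- hscal_distr_l, !hadd_0. auto. Qed.
Lemma opp_scal x : hopp H x = (mkC (-1) 0) *h x.
Proof. apply (add_cancel x). rewrite hadd_opp. rewrite <- (hscal_1 _ H x) at 1.
  rewrite <- hscal_distr_r. rewrite <- (scal_C0 x). f_equal. ceq. Qed.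
Lemma sub_scal x y : x -h y = x +h (mkC (-1) 0) *h y.
Proof. unfold hsub. rewrite opp_scal. auto. Qed.

Lemma inner_O_r x : << x , O >> = C0.
Proof. assert (E: << x, O >> = Cadd << x, O >> << x, O >>).
  { rewrite <- hinner_add_r, hadd_0. auto. }
  pose proof (f_equal Re E); pose proof (f_equal Im E); simpl in *; apply Cext; simpl; lra. Qed.
Lemma inner_add_l x y z : << x +h y , z >> = Cadd << x , z >> << y, z >>.
Proof. rewrite hinner_conj, hinner_add_r, (hinner_conj _ H z x), (hinner_conj _ H z y). ceq. Qed.
Lemma inner_scal_l a x y : << a *h x , y >> = Cmul (Cconj a) << x , y >>.
Proof. rewrite hinner_conj, hinner_scal_r, (hinner_conj _ H y x). ceq. Qed.
Lemma inner_O_l x : << O , x >> = C0.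
Proof. rewrite hinner_conj, inner_O_r. ceq. Qed.
Lemma inner_sub_r x y z : << x , y -h z >> = Csub << x , y >> << x, z >>.
Proof. rewrite sub_scal, hinner_add_r, hinner_scal_r. ceq. Qed.
Lemma inner_sub_l x y z : << x -h y , z >> = Csub << x , z >> << y, z >>.
Proof. rewrite sub_scal, inner_add_l, inner_scal_l. ceq. Qed.

Lemma nsq_ge0 x : 0 <= nsqd x.
Proof. apply hinner_pos. Qed.
Lemma nrm_sq x : nrm x ^ 2 = nsqd x.
Proof. unfold hnorm. rewrite pow2_sqrt; auto. apply nsq_ge0. Qed.
Lemma nrm_ge0 x : 0 <= nrm x.
Proof. apply sqrt_pos. Qed.

Lemma nsq_expand x t y : nsqd (x +h t *h y) =
  nsqd x + 2 * (Re t * Re << x , y >> - Im t * Im << x , y >>) + (Re t ^ 2 + Im t ^ 2) * nsqd y.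
Proof.
  unfold nsqd. rewrite inner_add_l, !hinner_add_r, inner_scal_l, !hinner_scal_r, inner_scal_l.
  rewrite (hinner_conj _ H y x). destruct (hinner_pos _ H y) as [Hy _].
  destruct t as [t1 t2]. destruct (<< x, y >>) as [b1 b2]. simpl. rewrite Hy. ring.
Qed.

Lemma CS x y : Cmod << x , y >> <= nrm x * nrm y.
Proof.
  apply sq_le. pose proof (nrm_ge0 x); pose proof (nrm_ge0 y); nra.
  rewrite Rpow_mult_distr, !nrm_sq, Cmod_sq.
  destruct (<< x , y >>) as [b1 b2] eqn:Eb. simpl.
  pose proof (nsq_ge0 x). pose proof (nsq_ge0 y).
  destruct (Req_dec (nsqd y) 0) as [Hc|Hc].
  - destruct (Req_dec (b1^2+b2^2) 0) as [Hb|Hb]. nra.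
    assert (0 < b1^2+b2^2) by nra.
    set (L := (nsqd x + 1)/(2*(b1^2+b2^2))).
    assert (HL : L * (2*(b1^2+b2^2)) = nsqd x + 1) by (unfold L; field; lra).
    pose proof (nsq_ge0 (x +h (mkC (- L * b1) (L * b2)) *h y)).
    rewrite nsq_expand, Eb, Hc in H3. simpl in H3.
    exfalso. nra.
  - assert (0 < nsqd y) by lra.
    pose proof (nsq_ge0 (x +h (mkC (- b1 / nsqd y) (b2 / nsqd y)) *h y)).
    rewrite nsq_expand, Eb in H3. simpl in H3.
    set (q := - (b1^2+b2^2) / nsqd y).
    assert (E: 2 * (- b1 / nsqd y * b1 - b2 / nsqd y * b2) + (- b1 / nsqd y * (- b1 / nsqd y * 1) + b2 / nsqd y * (b2 / nsqd y * 1)) * nsqd y = q) by (unfold q; field; lra).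
    rewrite Rplus_assoc, E in H3.
    assert (Hk: q * nsqd y = - (b1^2+b2^2)) by (unfold q; field; lra).
    clearbody q.
    assert (0 <= (nsqd x + q) * nsqd y) by (apply Rmult_le_pos; lra).
    nra.
Qed.
End Hil.


Section Hil2.
Context {X : Type} (H : HilbertSpace X).
Local Notation "x +h y" := (hadd H x y) (at level 50, left associativity).
Local Notation "a *h x" := (hscal H a x) (at level 40).
Local Notation "x -h y" := (hsub H x y) (at level 50, left associativity).
Local Notation "'O'" := (hzero H).
Local Notation "<< x , y >>" := (hinner H x y).
Local Notation nrm := (hnorm H).
Local Notation nsq := (nsqd H).

Lemma opp_add a b : hopp H (a +h b) = hopp H a +h hopp H b.
Proof. apply (add_cancel H (a +h b)). rewrite hadd_opp.
  rewrite hadd_assoc, (hadd_comm _ H a b), <- (hadd_assoc _ H b a), hadd_opp, hadd_0, hadd_opp. auto. Qed.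
Lemma opp_opp a : hopp H (hopp H a) = a.
Proof. apply (add_cancel H (hopp H a)). rewrite hadd_opp, hadd_comm, hadd_opp. auto. Qed.
Lemma G1 x y z : (x -h y) +h (y -h z) = x -h z.
Proof. unfold hsub. rewrite <- hadd_assoc, (hadd_assoc _ H (hopp H y)), (hadd_comm _ H (hopp H y) y), hadd_opp, add_0_l. auto. Qed.
Lemma G2 x y : hopp H (x -h y) = y -h x.
Proof. unfold hsub. rewrite opp_add, opp_opp, hadd_comm. auto. Qed.
Lemma G3 x y z : x -h (y +h z) = (x -h y) -h z.
Proof. unfold hsub. rewrite opp_add, hadd_assoc. auto. Qed.
Lemma G4 x y z : x -h (y -h z) = (x -h y) +h z.
Proof. unfold hsub. rewrite opp_add, opp_opp, hadd_assoc. auto. Qed.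
Lemma G5 g a l : (g -h a) -h (g -h l) = l -h a.
Proof. change ((g -h a) +h hopp H (g -h l) = l -h a). rewrite G2, hadd_comm, G1. auto. Qed.
Lemma sub_self x : x -h x = O.
Proof. apply hadd_opp. Qed.
Lemma sub_O x : x -h O = x.
Proof. unfold hsub. assert (E: hopp H O = O) by (rewrite <- (add_0_l H (hopp H O)); apply hadd_opp). rewrite E; apply hadd_0. Qed.

Lemma nsq_scal a x : nsq (a *h x) = Cmod a ^ 2 * nsq x.
Proof. unfold nsqd. rewrite inner_scal_l, hinner_scal_r, Cmod_sq.
  destruct (hinner_pos _ H x) as [Hi _]. destruct a as [a1 a2]; destruct (<< x, x >>) as [c1 c2]; simpl in *.
  subst. ring. Qed.
Lemma nrm_scal a x : nrm (a *h x) = Cmod a * nrm x.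
Proof. unfold hnorm. fold (nsqd H (a *h x)). rewrite nsq_scal, sqrt_mult.
  rewrite sqrt_pow2 by apply Cmod_ge0. auto. pose proof (Cmod_ge0 a); nra. apply nsq_ge0. Qed.
Lemma nrm_opp x : nrm (hopp H x) = nrm x.
Proof. rewrite opp_scal, nrm_scal, Cmod_real. replace (Rabs (-1)) with 1. ring. rewrite Rabs_left by lra. ring. Qed.
Lemma nrm_sub_sym x y : nrm (x -h y) = nrm (y -h x).
Proof. rewrite <- G2, nrm_opp. auto. Qed.
Lemma nsq_add x y : nsq (x +h y) = nsq x + 2 * Re << x, y >> + nsq y.
Proof. rewrite <- (hscal_1 _ H y) at 1. rewrite nsq_expand. unfold Defs.C1; simpl. ring. Qed.
Lemma nrm_tri x y : nrm (x +h y) <= nrm x + nrm y.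
Proof. apply sq_le. pose proof (nrm_ge0 H x); pose proof (nrm_ge0 H y); lra.
  rewrite nrm_sq, nsq_add. replace ((nrm x + nrm y)^2) with (nrm x ^2 + nrm y^2 + 2 * (nrm x * nrm y)) by ring.
  rewrite !nrm_sq. pose proof (CS H x y). pose proof (Cmod_Re (<< x, y >>)).
  pose proof (Rle_abs (Re << x, y >>)). lra. Qed.
Lemma nrm_tri_sub x y z : nrm (x -h z) <= nrm (x -h y) + nrm (y -h z).
Proof. rewrite <- (G1 x y z). apply nrm_tri. Qed.
Lemma nrm_sub_le x y : nrm (x -h y) <= nrm x + nrm y.
Proof. unfold hsub. rewrite <- (nrm_opp y). apply nrm_tri. Qed.
Lemma nrm_O : nrm O = 0.
Proof. unfold hnorm. rewrite inner_O_r. simpl. apply sqrt_0. Qed.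
Lemma nrm_eq0 x : nrm x = 0 -> x = O.
Proof. intros E. apply hinner_def. assert (nsq x = 0) by (rewrite <- nrm_sq, E; ring).
  destruct (hinner_pos _ H x). unfold nsqd in H0. apply Cext; simpl; auto. Qed.
Lemma inner_cont a x y : Cmod (Csub << a, x >> << a, y >>) <= nrm a * nrm (x -h y).
Proof. rewrite <- inner_sub_r. apply CS. Qed.
Lemma inner_cont_l a x y : Cmod (Csub << x, a >> << y, a >>) <= nrm (x -h y) * nrm a.
Proof. rewrite <- inner_sub_l. apply CS. Qed.
Lemma inner_hsum x N F : << x, hsum H N F >> = Csum N (fun n => << x, F n >>).
Proof. induction N; simpl. apply inner_O_r. rewrite hinner_add_r, IHN. auto. Qed.

Section Lin.
Variable T : X -> X.
Hypothesis HT : is_linear H T.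
Lemma lin_add x y : T (x +h y) = T x +h T y.
Proof. apply HT. Qed.
Lemma lin_scal a x : T (a *h x) = a *h T x.
Proof. apply HT. Qed.
Lemma lin_O : T O = O.
Proof. apply (add_cancel H (T O)). rewrite <- lin_add, !hadd_0. auto. Qed.
Lemma lin_opp x : T (hopp H x) = hopp H (T x).
Proof. rewrite !opp_scal, lin_scal. auto. Qed.
Lemma lin_sub x y : T (x -h y) = T x -h T y.
Proof. unfold hsub. rewrite lin_add, lin_opp. auto. Qed.
Lemma lin_hsum N F : T (hsum H N F) = hsum H N (fun n => T (F n)).
Proof. induction N; simpl. apply lin_O. rewrite lin_add, IHN. auto. Qed.
End Lin.
End Hil2.


Lemma incr_ge (phi : nat -> nat) : (forall n, (phi n < phi (S n))%nat) -> forall n, (n <= phi n)%nat.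
Proof. intros Hp n; induction n. lia. specialize (Hp n). lia. Qed.

Lemma Un_cv0_nonneg (u : nat -> R) : (forall n, 0 <= u n) ->
  Un_cv u 0 <-> (forall eps, eps > 0 -> exists N, forall n, (n >= N)%nat -> u n < eps).
Proof. intros Hu; split; intros Hc eps He; destruct (Hc eps He) as [N HN]; exists N; intros n Hn;
  specialize (HN n Hn); specialize (Hu n); unfold Rdist in *; rewrite Rminus_0_r in *.
  rewrite Rabs_right in HN; lra. rewrite Rabs_right; lra. Qed.

Lemma Un_cv_sub (u : nat -> R) l (s : nat -> nat) : Un_cv u l -> (forall n, (n <= s n)%nat) ->
  Un_cv (fun n => u (s n)) l.
Proof. intros Hc Hs eps He. destruct (Hc eps He) as [N HN]. exists N. intros n Hn. apply HN.
  specialize (Hs n). lia. Qed.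

Section Hil3.
Context {X : Type} (H : HilbertSpace X).
Local Notation "x +h y" := (hadd H x y) (at level 50, left associativity).
Local Notation "a *h x" := (hscal H a x) (at level 40).
Local Notation "x -h y" := (hsub H x y) (at level 50, left associativity).
Local Notation "'O'" := (hzero H).
Local Notation "<< x , y >>" := (hinner H x y).
Local Notation nrm := (hnorm H).
Local Notation nsq := (nsqd H).

Lemma compact_bounded (T : X -> X) : compact_operator H T -> exists K, 0 <= K /\ forall x, nrm (T x) <= K * nrm x.
Proof.
  intros [HT Hc]. apply NNPP. intros Hn.
  assert (Hx : forall n : nat, exists x, nrm (T x) > INR n * nrm x).
  { intros n. apply NNPP. intros Hn2. apply Hn. exists (INR n). split. apply pos_INR.
    intros x. apply Rnot_gt_le. intros Hg. apply Hn2. exists x. auto. }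
  apply choice_nat in Hx. destruct Hx as [x Hx].
  assert (Hnz : forall n, nrm (x n) > 0).
  { intros n. specialize (Hx n). pose proof (nrm_ge0 H (x n)). destruct (Req_dec (nrm (x n)) 0) as [E|E]; [|lra].
    apply nrm_eq0 in E. rewrite E, (lin_O H T HT), nrm_O in Hx. lra. }
  set (y := fun n => mkC (/ nrm (x n)) 0 *h x n).
  assert (Hy : forall n, nrm (y n) = 1).
  { intros n. unfold y. rewrite nrm_scal, Cmod_real, Rabs_right. field. specialize (Hnz n); lra.
    apply Rle_ge, Rlt_le, Rinv_0_lt_compat. apply Hnz. }
  assert (HTy : forall n, nrm (T (y n)) > INR n).
  { intros n. unfold y. rewrite (lin_scal H T HT), nrm_scal, Cmod_real, Rabs_right.
    specialize (Hx n). specialize (Hnz n).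
    apply Rmult_gt_reg_l with (nrm (x n)). lra. rewrite <- Rmult_assoc, Rinv_r by lra. lra.
    apply Rle_ge, Rlt_le, Rinv_0_lt_compat. apply Hnz. }
  destruct (Hc y) as [phi [Hphi [l Hl]]]. exists 1. intros n; rewrite Hy; lra.
  destruct (Hl 1 Rlt_0_1) as [N HN].
  destruct (INR_unbounded (nrm l + 1)) as [m Hm].
  specialize (HN (max N m) (Nat.le_max_l _ _)). unfold Rdist in HN. rewrite Rminus_0_r, Rabs_right in HN by (apply Rle_ge, nrm_ge0).
  pose proof (nrm_tri_sub H (T (y (phi (max N m)))) l O). rewrite !sub_O in H0.
  specialize (HTy (phi (max N m))).
  assert (INR m <= INR (phi (max N m))). { apply le_INR. pose proof (incr_ge phi Hphi (max N m)). lia. }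
  lra.
Qed.
End Hil3.


Section Hil4.
Context {X : Type} (H : HilbertSpace X).
Local Notation "x +h y" := (hadd H x y) (at level 50, left associativity).
Local Notation "a *h x" := (hscal H a x) (at level 40).
Local Notation "x -h y" := (hsub H x y) (at level 50, left associativity).
Local Notation "'O'" := (hzero H).
Local Notation "<< x , y >>" := (hinner H x y).
Local Notation nrm := (hnorm H).
Local Notation nsq := (nsqd H).

Variable P : X -> Prop.
Hypothesis P0 : P O.
Hypothesis Padd : forall x y, P x -> P y -> P (x +h y).
Hypothesis Pscal : forall a x, P x -> P (a *h x).
Hypothesis Pclosed : forall (s : nat -> X) x, (forall n, P (s n)) -> Un_cv (fun n => nrm (s n -h x)) 0 -> P x.

Lemma Psub x y : P x -> P y -> P (x -h y).
Proof. intros. unfold hsub. rewrite opp_scal. auto. Qed.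

Lemma nrm_lt_sq x e : 0 < e -> nsq x < e ^ 2 -> nrm x < e.
Proof. intros. apply Rnot_le_lt. intros Hl. rewrite <- nrm_sq in H1. pose proof (nrm_ge0 H x). nra. Qed.

Lemma projection eta : exists p, P p /\ forall s, P s -> << s, eta -h p >> = C0.
Proof.
  set (E := fun r => exists s, P s /\ r = - nsq (eta -h s)).
  assert (HB : bound E). { exists 0. intros r [s [_ ->]]. pose proof (nsq_ge0 H (eta -h s)). lra. }
  assert (HE : exists r, E r). { exists (- nsq (eta -h O)). exists O. auto. }
  destruct (completeness E HB HE) as [m [Hub Hlub]].
  set (d := - m).
  assert (F1 : forall s, P s -> d <= nsq (eta -h s)).
  { intros s Ps. assert (- nsq (eta -h s) <= m) by (apply Hub; exists s; auto). unfold d; lra. }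
  assert (Hd0 : 0 <= d). { assert (m <= 0). apply Hlub. intros r [s [_ ->]]. pose proof (nsq_ge0 H (eta -h s)). lra. unfold d; lra. }
  assert (F2 : forall e, e > 0 -> exists s, P s /\ nsq (eta -h s) < d + e).
  { intros e He. apply NNPP. intros Hn. assert (m <= - d - e).
    { apply Hlub. intros r [s [Ps ->]]. apply Rnot_gt_le. intros Hg. apply Hn. exists s. split; auto. lra. }
    unfold d in *; lra. }
  assert (Hs : forall n : nat, exists s, P s /\ nsq (eta -h s) < d + / (INR n + 1)).
  { intros n. apply F2. apply Rlt_gt, Rinv_0_lt_compat. pose proof (pos_INR n); lra. }
  apply choice_nat in Hs. destruct Hs as [s Hs].
  assert (Cau : forall n k, nsq (s n -h s k) <= 2 * / (INR n + 1) + 2 * / (INR k + 1)).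
  { intros n k. destruct (Hs n) as [Pn Hn]. destruct (Hs k) as [Pk Hk].
    set (x := eta -h s n). set (y := s n -h s k).
    assert (E1 : eta -h s k = x +h Defs.C1 *h y) by (rewrite hscal_1; unfold x, y; rewrite G1; auto).
    assert (Pm : P (s n -h mkC (/2) 0 *h y)) by (apply Psub; auto; apply Pscal; apply Psub; auto).
    assert (E2 : eta -h (s n -h mkC (/2) 0 *h y) = x +h mkC (/2) 0 *h y) by (rewrite G4; auto).
    pose proof (F1 _ Pm). rewrite E2, nsq_expand in H0. rewrite E1, nsq_expand in Hk.
    simpl in *. change (nsq x < d + / (INR n + 1)) in Hn. lra. }
  assert (Hcv : forall e, e > 0 -> exists M, forall n k, (n >= M)%nat -> (k >= M)%nat -> nrm (s n -h s k) < e).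
  { intros e He. destruct (INR_unbounded (4 / e ^ 2)) as [M HM]. exists M. intros n k Hn Hk.
    apply nrm_lt_sq; auto. eapply Rle_lt_trans. apply Cau.
    assert (INR M <= INR n) by (apply le_INR; lia). assert (INR M <= INR k) by (apply le_INR; lia).
    assert (0 < e ^ 2) by (apply pow_lt; lra).
    assert (4 / e^2 * e^2 = 4) by (field; lra).
    assert (/ (INR n + 1) < e^2 / 4).
    { apply Rmult_lt_reg_r with (INR n + 1). pose proof (pos_INR M); lra. rewrite Rinv_l by (pose proof (pos_INR M); lra). nra. }
    assert (/ (INR k + 1) < e^2 / 4).
    { apply Rmult_lt_reg_r with (INR k + 1). pose proof (pos_INR M); lra. rewrite Rinv_l by (pose proof (pos_INR M); lra). nra. }
    lra. }
  destruct (hcomplete _ H s Hcv) as [p Hp].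
  assert (Hp' : Un_cv (fun n => nrm (s n -h p)) 0).
  { apply Un_cv0_nonneg. intros; apply nrm_ge0. exact Hp. }
  assert (Pp : P p) by (apply (Pclosed s); auto; intros n; apply Hs).
  assert (Hle : nsq (eta -h p) <= d).
  { apply Rnot_gt_le. intros Hg. set (e := nsq (eta -h p) - d).
    assert (He : e > 0) by (unfold e; lra).
    destruct (INR_unbounded (2 / e)) as [N1 HN1].
    assert (Hdl : 0 < e / (2 * (2 * d + 5))) by (apply Rdiv_lt_0_compat; lra).
    destruct (Hp' (Rmin 1 (e / (2 * (2 * d + 5)))) ltac:(apply Rmin_glb_lt; lra)) as [N2 HN2].
    set (n := max N1 N2). specialize (HN2 n (Nat.le_max_r _ _)). unfold Rdist in HN2.
    rewrite Rminus_0_r, Rabs_right in HN2 by (apply Rle_ge, nrm_ge0).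
    destruct (Hs n) as [_ Hn].
    assert (INR N1 <= INR n) by (apply le_INR; lia).
    assert (/ (INR n + 1) < e / 2).
    { apply Rmult_lt_reg_r with (INR n + 1). pose proof (pos_INR N1); lra. rewrite Rinv_l by (pose proof (pos_INR N1); lra).
      assert (2 / e * e = 2) by (field; lra). nra. }
    assert (Ee : eta -h p = (eta -h s n) +h (s n -h p)) by (rewrite G1; auto).
    assert (Hsum : e + d = nsq (eta -h s n) + 2 * Re << eta -h s n, s n -h p >> + nsq (s n -h p)) by (unfold e; rewrite Ee, nsq_add; ring). clear Hg.
    pose proof (CS H (eta -h s n) (s n -h p)). pose proof (Cmod_Re (<< eta -h s n, s n -h p >>)).
    pose proof (Rle_abs (Re << eta -h s n, s n -h p >>)).
    set (a := nrm (eta -h s n)) in *. set (b := nrm (s n -h p)) in *.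
    assert (a ^ 2 < d + 1). { unfold a. rewrite nrm_sq. assert (/ (INR n + 1) <= 1). 
      { rewrite <- Rinv_1. apply Rinv_le_contravar. lra. pose proof (pos_INR n); lra. } lra. }
    assert (a < d + 2). { pose proof (nrm_ge0 H (eta -h s n)). fold a in H6. nra. }
    assert (Hb1 : b < 1) by (pose proof (Rmin_l 1 (e / (2 * (2 * d + 5)))); lra).
    assert (Hb2 : b < e / (2 * (2 * d + 5))) by (pose proof (Rmin_r 1 (e / (2 * (2 * d + 5)))); lra).
    assert (Hb0 : 0 <= b) by apply nrm_ge0.
    assert (Ha0 : 0 <= a) by apply nrm_ge0.
    assert (nsq (eta -h s n) = a ^ 2) by (unfold a; rewrite nrm_sq; auto).
    assert (nsq (s n -h p) = b ^ 2) by (unfold b; rewrite nrm_sq; auto).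
    assert (b * (2 * (2 * d + 5)) < e).
    { apply Rmult_lt_reg_r with (/ (2 * (2 * d + 5))). apply Rinv_0_lt_compat; lra.
      rewrite Rmult_assoc, Rinv_r by lra. lra. }
    assert ((d + 2 - a) * b >= 0) by (apply Rle_ge, Rmult_le_pos; lra). nra. }
  exists p. split; auto.
  intros s0 Ps0. set (w := eta -h p).
  destruct (<< s0, w >>) as [b1 b2] eqn:Eb.
  set (L := / (nsq s0 + 1)).
  assert (HL0 : 0 < L) by (unfold L; apply Rinv_0_lt_compat; pose proof (nsq_ge0 H s0); lra).
  assert (HL1 : L * nsq s0 < 1).
  { assert (L * (nsq s0 + 1) = 1) by (unfold L; field; pose proof (nsq_ge0 H s0); lra). nra. }
  set (t := mkC (- L * b1) (- L * b2)).
  assert (Pq : P (p -h t *h s0)) by (apply Psub; auto).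
  pose proof (F1 _ Pq). rewrite G4 in H0. fold w in H0. rewrite nsq_expand in H0.
  rewrite (hinner_conj _ H w s0), Eb in H0. unfold t in H0; simpl in H0.
  fold w in Hle.
  assert (0 <= nsq s0) by apply nsq_ge0.
  assert (Hq : (b1^2 + b2^2) * (L * (L * nsq s0 - 2)) >= 0) by nra.
  assert (L * (L * nsq s0 - 2) < 0) by nra.
  set (q := L * (L * nsq s0 - 2)) in *. clearbody q.
  assert (Hz : b1^2 + b2^2 <= 0).
  { apply Rnot_lt_le. intros Hpp. assert (0 < (b1^2+b2^2) * (- q)) by (apply Rmult_lt_0_compat; lra). lra. }
  apply Cext; simpl; nra.
Qed.
End Hil4.


Section Hil5.
Context {X : Type} (H : HilbertSpace X).
Local Notation "x +h y" := (hadd H x y) (at level 50, left associativity).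
Local Notation "a *h x" := (hscal H a x) (at level 40).
Local Notation "x -h y" := (hsub H x y) (at level 50, left associativity).
Local Notation "'O'" := (hzero H).
Local Notation "<< x , y >>" := (hinner H x y).
Local Notation nrm := (hnorm H).
Local Notation nsq := (nsqd H).

Lemma small_zero c K : 0 <= c -> 0 <= K -> (forall e, e > 0 -> c <= K * e) -> c = 0.
Proof. intros Hc HK He. destruct (Req_dec c 0); auto. exfalso.
  specialize (He (c / (K + 1)) ltac:(apply Rdiv_lt_0_compat; lra)).
  assert (K * (c / (K+1)) < c). { apply Rmult_lt_reg_r with (K+1). lra.
    replace (K * (c / (K + 1)) * (K + 1)) with (K * c) by (field; lra). nra. } lra. Qed.

Lemma riesz (phi : X -> Cplx) (Hadd : forall x y, phi (x +h y) = Cadd (phi x) (phi y))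
  (Hsc : forall a x, phi (a *h x) = Cmul a (phi x)) (K : R) (HK0 : 0 <= K)
  (HK : forall x, Cmod (phi x) <= K * nrm x) : exists r, forall x, phi x = << r, x >>.
Proof.
  assert (Phi0 : phi O = C0).
  { assert (E : phi O = Cadd (phi O) (phi O)) by (rewrite <- Hadd, hadd_0; auto).
    pose proof (f_equal Re E); pose proof (f_equal Im E); simpl in *; apply Cext; simpl; lra. }
  assert (Phisub : forall x y, phi (x -h y) = Csub (phi x) (phi y)).
  { intros. rewrite sub_scal, Hadd, Hsc. ceq. }
  destruct (classic (forall x, phi x = C0)) as [Hall|Hex].
  { exists O. intros x. rewrite Hall, inner_O_l. auto. }
  apply not_all_ex_not in Hex. destruct Hex as [x0 Hx0].
  set (P := fun x => phi x = C0).
  destruct (projection H P) with (eta := x0) as [p [Pp Hp]].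
  - exact Phi0.
  - intros x y Px Py. unfold P in *. rewrite Hadd, Px, Py. ceq.
  - intros a x Px. unfold P in *. rewrite Hsc, Px. ceq.
  - intros s x Hs Hc. unfold P in *. apply Cmod_eq0. apply (small_zero _ K). apply Cmod_ge0. auto.
    intros e He. destruct (Hc e He) as [N HN]. specialize (HN N (le_n _)).
    unfold Rdist in HN. rewrite Rminus_0_r, Rabs_right in HN by (apply Rle_ge, nrm_ge0).
    assert (phi x = phi (x -h s N)) by (rewrite Phisub, Hs; ceq).
    rewrite H0. eapply Rle_trans. apply HK. rewrite nrm_sub_sym. apply Rmult_le_compat_l; lra.
  - set (z := x0 -h p).
    assert (Hz : phi z <> C0) by (unfold z; rewrite Phisub, Pp; intros E; apply Hx0;
       pose proof (f_equal Re E); pose proof (f_equal Im E); simpl in *; apply Cext; simpl; lra).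
    assert (Hnz : nsq z <> 0).
    { intros E. apply Hz. assert (z = O). { apply nrm_eq0. unfold hnorm. unfold nsqd in E. rewrite E. apply sqrt_0. }
      rewrite H0. auto. }
    exists (Cmul (mkC (/ nsq z) 0) (Cconj (phi z)) *h z).
    intros x.
    assert (Py : P (phi z *h x -h phi x *h z)) by (unfold P; rewrite Phisub, !Hsc; ceq).
    specialize (Hp _ Py). fold z in Hp.
    rewrite inner_sub_l, !inner_scal_l in Hp. rewrite inner_scal_l.
    rewrite (hinner_conj _ H x z) in Hp. destruct (hinner_pos _ H z) as [Hi _].
    unfold nsqd in *.
    destruct (<< z, z >>) as [n1 n2]. destruct (<< z, x >>) as [w1 w2].
    destruct (phi x) as [a1 a2]. destruct (phi z) as [c1 c2]. simpl in *. subst n2.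
    pose proof (f_equal Re Hp) as R1. pose proof (f_equal Im Hp) as R2. simpl in R1, R2.
    apply Cext; simpl.
    + apply Rmult_eq_reg_r with n1; auto. field_simplify; auto. nra.
    + apply Rmult_eq_reg_r with n1; auto. field_simplify; auto. nra.
Qed.
End Hil5.


Lemma Csum_ext N F G : (forall n, (n < N)%nat -> F n = G n) -> Csum N F = Csum N G.
Proof. induction N; simpl; intros Hf; auto. rewrite IHN; [rewrite Hf; auto | intros; apply Hf; lia]. Qed.
Lemma Csum_zero N F : (forall n, F n = C0) -> Csum N F = C0.
Proof. induction N; simpl; intros; auto. rewrite IHN, H by auto. ceq. Qed.
Lemma Re_Csum_ge N (y : nat -> Cplx) : 0 <= Re (Csum N (fun i => mkC (Cmod (y i) ^ 2) 0)) /\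
  forall i, (i < N)%nat -> Cmod (y i) ^ 2 <= Re (Csum N (fun i => mkC (Cmod (y i) ^ 2) 0)).
Proof. induction N; cbn [Csum Cadd Re C0]. split. lra. intros; lia.
  destruct IHN as [H1 H2]. pose proof (pow2_ge_0 (Cmod (y N))). split. lra.
  intros i Hi. destruct (Nat.eq_dec i N). subst. lra. specialize (H2 i ltac:(lia)). lra. Qed.
Lemma Cmod_le_CNnorm N y i : (i < N)%nat -> Cmod (y i) <= CNnorm N y.
Proof. intros Hi. unfold CNnorm. destruct (Re_Csum_ge N y) as [_ H2]. specialize (H2 i Hi).
  rewrite <- (sqrt_pow2 (Cmod (y i))) by apply Cmod_ge0. apply sqrt_le_1_alt. auto. Qed.

Section Hil6.
Context {X : Type} (H : HilbertSpace X).
Local Notation "x +h y" := (hadd H x y) (at level 50, left associativity).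
Local Notation "a *h x" := (hscal H a x) (at level 40).
Local Notation "x -h y" := (hsub H x y) (at level 50, left associativity).
Local Notation "'O'" := (hzero H).
Local Notation "<< x , y >>" := (hinner H x y).
Local Notation nrm := (hnorm H).
Local Notation nsq := (nsqd H).

Lemma residual_eq (T : X -> X) (HT : is_linear H T) u v g N x i :
  residual H T u v g N x i = Csub << v i, T (hat H u N x) >> << v i, g >>.
Proof. unfold residual, hat, vecg. f_equal. rewrite (lin_hsum H T HT), inner_hsum.
  apply Csum_ext. intros n _. rewrite (lin_scal H T HT), hinner_scal_r. unfold matA. ceq. Qed.

Lemma onb_nrm (v : nat -> X) : orthonormal_basis H v -> forall i, nrm (v i) = 1.
Proof. intros [Ho _] i. unfold hnorm. rewrite Ho, Nat.eqb_refl. simpl. apply sqrt_1. Qed.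

Lemma onb_perp (v : nat -> X) z : orthonormal_basis H v -> (forall i, << v i, z >> = C0) -> z = O.
Proof.
  intros [Ho Hd] Hz. apply nrm_eq0.
  assert (nrm z ^ 2 = 0).
  { apply (small_zero _ (nrm z)). apply pow2_ge_0. apply nrm_ge0. intros e He.
    destruct (Hd z e He) as [N [c Hc]].
    set (s := hsum H N (fun n => c n *h v n)) in *.
    assert (Hzs : << z, s >> = C0).
    { unfold s. rewrite inner_hsum. apply Csum_zero. intros n. rewrite hinner_scal_r, hinner_conj, Hz. ceq. }
    rewrite nrm_sq. unfold nsqd.
    assert (<< z, z >> = << z, z -h s >>) by (rewrite inner_sub_r, Hzs; ceq).
    rewrite H0. eapply Rle_trans. apply Rle_abs. eapply Rle_trans. apply Cmod_Re.
    eapply Rle_trans. apply CS. apply Rmult_le_compat_l. apply nrm_ge0. lra. }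
  pose proof (nrm_ge0 H z). nra.
Qed.

Lemma sub_eq0 x y : x -h y = O -> x = y.
Proof. intros E. assert (x -h y +h y = y) by (rewrite E; apply add_0_l).
  unfold hsub in H0. rewrite <- hadd_assoc, (hadd_comm _ H (hopp H y)), hadd_opp, hadd_0 in H0. auto. Qed.

End Hil6.


Lemma cv0_of (u : nat -> R) : (forall n, 0 <= u n) -> (forall e, e > 0 -> exists N, forall n, (n >= N)%nat -> u n <= e) -> Un_cv u 0.
Proof. intros H0 H1. apply Un_cv0_nonneg; auto. intros e He. destruct (H1 (e/2)) as [N HN]. lra.
  exists N. intros n Hn. specialize (HN n Hn). lra. Qed.
Lemma cv0_get (u : nat -> R) : Un_cv u 0 -> forall e, e > 0 -> exists N, forall n, (n >= N)%nat -> u n < e.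
Proof. intros Hc e He. destruct (Hc e He) as [N HN]. exists N. intros n Hn. specialize (HN n Hn).
  unfold Rdist in HN. rewrite Rminus_0_r in HN. pose proof (Rle_abs (u n)). lra. Qed.

Theorem theorem3p2 (X : Type) (HX : HilbertSpace X)
  (Hsep : separable HX) (Hinf : infinite_dimensional HX)
  (A : X -> X) (HA : compact_operator HX A)
  (Hinj : forall x y, A x = A y -> x = y)
  (g f : X) (Hf : A f = g)
  (u v : nat -> X) (Hu : orthonormal_basis HX u) (Hv : orthonormal_basis HX v)
  (fN : nat -> (nat -> Cplx))
  (Heps : Un_cv (fun N => CNnorm N (residual HX A u v g N (fN N))) 0)
  (Hbdd : exists M, forall N, hnorm HX (hat HX u N (fN N)) <= M) :
  Un_cv (fun N => hnorm HX (hsub HX g (A (hat HX u N (fN N))))) 0 /\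
  (forall eta : X,
     Un_cv (fun N => Cmod (hinner HX eta (hsub HX f (hat HX u N (fN N))))) 0).
Proof.
  pose proof HA as [Hlin Hcpt].
  set (ht := fun N => hat HX u N (fN N)).
  set (e := fun N => hsub HX g (A (ht N))).
  assert (Hres : forall N i, (i < N)%nat -> Cmod (hinner HX (v i) (e N)) <= CNnorm N (residual HX A u v g N (fN N))).
  { intros N i Hi. eapply Rle_trans; [|apply (Cmod_le_CNnorm N _ i Hi)].
    rewrite residual_eq by auto. unfold e. rewrite inner_sub_r, Cmod_sub_sym. apply Rle_refl. }
  assert (Part1 : Un_cv (fun N => hnorm HX (e N)) 0).
  { apply NNPP. intros Hn.
    assert (Hd : exists d, d > 0 /\ forall N, exists n, (n >= N)%nat /\ hnorm HX (e n) >= d).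
    { apply NNPP. intros Hd. apply Hn. intros d Hd0. apply NNPP. intros Hc. apply Hd. exists d. split; auto.
      intros N. apply NNPP. intros Hc2. apply Hc. exists N. intros n Hn'. unfold Rdist.
      rewrite Rminus_0_r, Rabs_right by (apply Rle_ge, nrm_ge0). apply Rnot_ge_lt. intros Hge. apply Hc2. eauto. }
    destruct Hd as [d [Hd0 Hd]]. apply choice_nat in Hd. destruct Hd as [sg Hsg].
    destruct (Hcpt (fun K => ht (sg K))) as [phi [Hphi [l Hl]]].
    { destruct Hbdd as [M HM]. exists M. intros; apply HM. }
    set (z := hsub HX g l).
    assert (Hsgphi : forall k, (k <= sg (phi k))%nat).
    { intros k. pose proof (incr_ge phi Hphi k). destruct (Hsg (phi k)). lia. }
    assert (Heps' := Un_cv_sub _ _ _ Heps Hsgphi).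
    assert (Hez : forall k, hsub HX (e (sg (phi k))) z = hsub HX l (A (ht (sg (phi k))))).
    { intros k. unfold e, z. apply G5. }
    assert (Hz : z = hzero HX).
    { apply (onb_perp HX v z Hv). intros i. apply Cmod_eq0. apply (small_zero _ 2). apply Cmod_ge0. lra.
      intros eps Heps0. destruct (cv0_get _ Hl eps Heps0) as [N1 HN1].
      destruct (cv0_get _ Heps' eps Heps0) as [N2 HN2].
      set (k := (N1 + N2 + S i)%nat). specialize (HN1 k ltac:(lia)). specialize (HN2 k ltac:(lia)).
      simpl in HN1, HN2.
      assert (Hi : (i < sg (phi k))%nat) by (pose proof (Hsgphi k); lia).
      pose proof (Hres _ _ Hi) as Q0.
      pose proof (inner_cont HX (v i) z (e (sg (phi k)))) as Q1.
      rewrite onb_nrm in Q1 by auto. rewrite nrm_sub_sym, Hez, nrm_sub_sym in Q1.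
      pose proof (Cmod_add (Csub (hinner HX (v i) z) (hinner HX (v i) (e (sg (phi k))))) (hinner HX (v i) (e (sg (phi k))))).
      replace (Cadd (Csub (hinner HX (v i) z) (hinner HX (v i) (e (sg (phi k))))) (hinner HX (v i) (e (sg (phi k)))))
        with (hinner HX (v i) z) in H by ceq.
      lra. }
    destruct (cv0_get _ Hl d Hd0) as [N1 HN1]. specialize (HN1 N1 (le_n _)). simpl in HN1.
    rewrite nrm_sub_sym, <- Hez, Hz, sub_O in HN1. destruct (Hsg (phi N1)). lra. }
  split. exact Part1.
  set (h := fun N => hsub HX f (ht N)).
  assert (Hh : forall N, A (h N) = e N) by (intros; unfold h, e; rewrite (lin_sub HX A Hlin), Hf; auto).
  destruct Hbdd as [M HM].
  set (Mh := hnorm HX f + M + 1).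
  assert (HMh : forall N, hnorm HX (h N) <= Mh).
  { intros N. unfold h, Mh. pose proof (nrm_sub_le HX f (ht N)). specialize (HM N). fold (ht N) in HM. lra. }
  assert (HMh0 : 0 < Mh) by (unfold Mh; pose proof (HM 0%nat); pose proof (nrm_ge0 HX (hat HX u 0 (fN 0%nat))); pose proof (nrm_ge0 HX f); lra).
  set (S := fun eta => Un_cv (fun N => Cmod (hinner HX eta (h N))) 0).
  assert (S0 : S (hzero HX)).
  { unfold S. apply cv0_of. intros; apply Cmod_ge0. intros ep Hep. exists 0%nat. intros.
    rewrite inner_O_l, Cmod_C0. lra. }
  assert (Sadd : forall x y, S x -> S y -> S (hadd HX x y)).
  { intros x y Sx Sy. unfold S in *. apply cv0_of. intros; apply Cmod_ge0. intros ep Hep.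
    destruct (cv0_get _ Sx (ep/2)) as [N1 HN1]. lra. destruct (cv0_get _ Sy (ep/2)) as [N2 HN2]. lra.
    exists (N1 + N2)%nat. intros n Hn. rewrite inner_add_l.
    pose proof (Cmod_add (hinner HX x (h n)) (hinner HX y (h n))).
    specialize (HN1 n ltac:(lia)). specialize (HN2 n ltac:(lia)). lra. }
  assert (Sscal : forall a x, S x -> S (hscal HX a x)).
  { intros a x Sx. unfold S in *. apply cv0_of. intros; apply Cmod_ge0. intros ep Hep.
    destruct (cv0_get _ Sx (ep / (Cmod a + 1))) as [N1 HN1].
    { apply Rdiv_lt_0_compat. lra. pose proof (Cmod_ge0 a); lra. }
    exists N1. intros n Hn. rewrite inner_scal_l, Cmod_mul, Cmod_conj. specialize (HN1 n Hn).
    pose proof (Cmod_ge0 a). pose proof (Cmod_ge0 (hinner HX x (h n))).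
    assert (Cmod a * Cmod (hinner HX x (h n)) <= (Cmod a + 1) * (ep / (Cmod a + 1))) by nra.
    replace ((Cmod a + 1) * (ep / (Cmod a + 1))) with ep in H1 by (field; lra). lra. }
  assert (Sclosed : forall (s : nat -> X) x, (forall n, S (s n)) -> Un_cv (fun n => hnorm HX (hsub HX (s n) x)) 0 -> S x).
  { intros s x Ss Hc. unfold S in *. apply cv0_of. intros; apply Cmod_ge0. intros ep Hep.
    destruct (cv0_get _ Hc (ep / (2 * Mh))) as [K HK]. apply Rdiv_lt_0_compat; lra.
    specialize (HK K (le_n _)).
    destruct (cv0_get _ (Ss K) (ep / 2)) as [N1 HN1]. lra.
    exists N1. intros n Hn. specialize (HN1 n Hn).
    pose proof (inner_cont_l HX (h n) x (s K)). rewrite nrm_sub_sym in H.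
    pose proof (Cmod_add (Csub (hinner HX x (h n)) (hinner HX (s K) (h n))) (hinner HX (s K) (h n))).
    replace (Cadd (Csub (hinner HX x (h n)) (hinner HX (s K) (h n))) (hinner HX (s K) (h n)))
      with (hinner HX x (h n)) in H0 by ceq.
    assert (hnorm HX (hsub HX (s K) x) * hnorm HX (h n) <= ep / (2 * Mh) * Mh).
    { apply Rmult_le_compat. apply nrm_ge0. apply nrm_ge0. lra. apply HMh. }
    replace (ep / (2 * Mh) * Mh) with (ep / 2) in H1 by (field; lra). lra. }
  destruct (compact_bounded HX A HA) as [Kb [HKb0 HKb]].
  intros eta.
  destruct (projection HX S S0 Sadd Sscal Sclosed eta) as [p [Sp Hp]].
  set (w := hsub HX eta p).
  destruct (riesz HX (fun x => hinner HX (A w) (A x))) with (K := hnorm HX (A w) * Kb) as [r Hr].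
  - intros x y. simpl. rewrite (lin_add HX A Hlin), hinner_add_r. auto.
  - intros a x. simpl. rewrite (lin_scal HX A Hlin), hinner_scal_r. auto.
  - apply Rmult_le_pos. apply nrm_ge0. auto.
  - intros x. simpl. eapply Rle_trans. apply CS. rewrite Rmult_assoc. apply Rmult_le_compat_l. apply nrm_ge0. auto.
  - assert (Sr : S r).
    { unfold S. apply cv0_of. intros; apply Cmod_ge0. intros ep Hep.
      destruct (cv0_get _ Part1 (ep / (hnorm HX (A w) + 1))) as [N1 HN1].
      { apply Rdiv_lt_0_compat. lra. pose proof (nrm_ge0 HX (A w)); lra. }
      exists N1. intros n Hn. rewrite <- Hr, Hh. specialize (HN1 n Hn).
      eapply Rle_trans. apply CS. pose proof (nrm_ge0 HX (A w)). pose proof (nrm_ge0 HX (e n)).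
      assert (hnorm HX (A w) * hnorm HX (e n) <= (hnorm HX (A w) + 1) * (ep / (hnorm HX (A w) + 1))) by nra.
      replace ((hnorm HX (A w) + 1) * (ep / (hnorm HX (A w) + 1))) with ep in H1 by (field; lra). lra. }
    specialize (Hp r Sr). fold w in Hp. rewrite <- Hr in Hp.
    apply hinner_def in Hp. rewrite <- (lin_O HX A Hlin) in Hp. apply Hinj in Hp.
    apply sub_eq0 in Hp. rewrite Hp. exact Sp.
Qed.
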